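(* Let $k\ge1$ and $u,w\in\mathcal S_\infty$ with $u\le_k w$, $u\ne w$. A maximal chain $u=u_0\lessdot_k u_1\lessdot_k\cdots\lessdot_k u_n=w$ of the interval $[u,w]_k$, with $u_i=u_{i-1}(a_i\,b_i)$, $a_i\le k<b_i$, is the CM-chain of $[u,w]_k$ if and only if it has no inversions.
   Context: $\mathcal S_\infty$ is the group of permutations of $\{1,2,\dots\}$ fixing all but finitely many points; $u(a\,b)$ is $u$ with the entries in positions $a,b$ swapped; $\ell$ is the number of inversions. The $k$-Bruhat order $\le_k$ is the reflexive–transitive closure of covers $u\lessdot_k u(a\,b)$ with $a\le k<b$ and $\ell(u(a\,b))=\ell(u)+1$; $[u,w]_k$ is its interval. CM-chain: if $\ell(w)=\ell(u)+1$ it is the unique chain $u\lessdot_k w$. If $\ell(w)>\ell(u)+1$, there are (known) unique integers $a\le k<b$ such that (I) $u(a)<w(a)$ and $w(a)=\max\{w(j):j\le k,\,u(j)<w(j)\}$, and (II) $u(b)>u(a)\ge w(b)$ and $w(b)=\min\{w(j):j>k,\,u(j)>u(a)\ge w(j)\}$; with $u_1=u(a\,b)$ one has $u\lessdot_k u_1\le_k w$, and the CM-chain of $[u,w]_k$ is $u$ followed by the CM-chain of $[u_1,w]_k$. An inversion of the maximal chain above is a pair $(i,j)$ with $1\le i<j\le n$ such that either $w(a_i)<w(a_j)$, or $w(a_i)=w(a_j)$ and $w(b_i)>w(b_j)$. *)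

(* Defs.v *)
From Stdlib Require Import ClassicalEpsilon.
From mathcomp Require Import all_boot.
Set Implicit Arguments. Unset Strict Implicit. Unset Printing Implicit Defensive.

(* A permutation of {1,2,...} is represented by a function nat -> nat;
   position 0 is a dummy, fixed by convention. *)
Definition in_Sinf (u : nat -> nat) : Prop :=
  injective u /\ u 0 = 0 /\ exists N, forall i, N < i -> u i = i.

Definition swap (u : nat -> nat) (a b : nat) : nat -> nat :=
  fun i => if i == a then u b else if i == b then u a else u i.

Definition inv_upto (N : nat) (u : nat -> nat) : nat :=
  \sum_(1 <= j < N.+1) \sum_(1 <= i < j) nat_of_bool (u j < u i).

Definition sbound (u : nat -> nat) : nat :=
  epsilon (inhabits 0) (fun N => forall i, N < i -> u i = i).

(* ell(u): number of inversions of u (correct for u in S_infty) *)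
Definition ell (u : nat -> nat) : nat := inv_upto (sbound u) u.

Definition kstep (k : nat) (u : nat -> nat) (a b : nat) : Prop :=
  [/\ 1 <= a <= k, k < b & ell (swap u a b) = (ell u).+1].

Definition kcover (k : nat) (u v : nat -> nat) : Prop :=
  exists a b, kstep k u a b /\ forall i, v i = swap u a b i.

Inductive kle (k : nat) : (nat -> nat) -> (nat -> nat) -> Prop :=
| kle_refl u w : (forall i, u i = w i) -> kle k u w
| kle_step u v w : kcover k u v -> kle k v w -> kle k u w.

(* the list s = [(a_1,b_1); ...; (a_n,b_n)] describes a maximal chain
   u = u_0 <._k u_1 <._k ... <._k u_n = w with u_i = u_{i-1}(a_i b_i) *)
Fixpoint is_kchain (k : nat) (u : nat -> nat) (s : seq (nat * nat))
  (w : nat -> nat) : Prop :=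
  match s with
  | [::] => forall i, u i = w i
  | (a, b) :: s' => kstep k u a b /\ is_kchain k (swap u a b) s' w
  end.

(* conditions (I) and (II) of the CM-chain construction *)
Definition cm_ab (k : nat) (u w : nat -> nat) (a b : nat) : Prop :=
  (1 <= a <= k /\ k < b) /\
  (* (I) *)
  (u a < w a /\ (forall j, 1 <= j <= k -> u j < w j -> w j <= w a)) /\
  (* (II) *)
  (u a < u b /\ w b <= u a /\
   (forall j, k < j -> u a < u j -> w j <= u a -> w b <= w j)).

Fixpoint is_cm (k : nat) (u w : nat -> nat) (s : seq (nat * nat)) : Prop :=
  match s with
  | [::] => False
  | (a, b) :: s' =>
      if ell w == (ell u).+1 then
        [/\ s' = [::], 1 <= a <= k, k < b & forall i, w i = swap u a b i]
      else
        [/\ (ell u).+1 < ell w, cm_ab k u w a b & is_cm k (swap u a b) w s']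
  end.

(* (i,j), i<j (0-indexed in s), is an inversion of the chain *)
Definition chain_inversion (w : nat -> nat) (s : seq (nat * nat)) (i j : nat) : Prop :=
  let p := nth (0, 0) s i in
  let q := nth (0, 0) s j in
  i < j < size s /\
  (w p.1 < w q.1 \/ (w p.1 = w q.1 /\ w q.2 < w p.2)).

Definition no_inversions (w : nat -> nat) (s : seq (nat * nat)) : Prop :=
  forall i j, ~ chain_inversion w s i j.

(* Main.v *)
Require Import Defs.
From Stdlib Require Import ClassicalEpsilon.
From mathcomp Require Import all_boot zify.
Set Implicit Arguments. Unset Strict Implicit. Unset Printing Implicit Defensive.

Definition valid (N : nat) (u : nat -> nat) := forall i, N < i -> u i = i.

Lemma sbound_valid u : in_Sinf u -> valid (sbound u) u.
Proof.
case=> _ [_ ex]. rewrite /sbound.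
exact: (epsilon_spec (inhabits 0) (fun N => forall i, N < i -> u i = i) ex).
Qed.

Lemma valid_le N M u : valid N u -> N <= M -> valid M u.
Proof. move=> v le i lt; apply: v; lia. Qed.

Lemma inv_upto_S N u : injective u -> valid N u -> inv_upto N.+1 u = inv_upto N u.
Proof.
move=> inj v. rewrite /inv_upto big_nat_recr //=.
rewrite [X in _ + X = _](_ : _ = 0) ?addn0 //.
rewrite big1_seq // => i; rewrite mem_index_iota => /andP [h1 h2].
rewrite v //.
have : u i <= N.
  rewrite leqNgt; apply/negP => H.
  have := v _ H => /inj E. lia.
by move=> H; apply/eqP; rewrite eqb0 -leqNgt ltnW.
Qed.

Lemma inv_upto_le N M u : injective u -> valid N u -> N <= M -> inv_upto N u = inv_upto M u.
Proof.
move=> inj v; elim: M => [|M IH]; first by rewrite leqn0 => /eqP ->.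
rewrite leq_eqVlt => /orP [/eqP -> //| lt].
rewrite inv_upto_S //; first by apply: IH.
by apply: valid_le v _.
Qed.

Lemma ell_eq N u : in_Sinf u -> valid N u -> ell u = inv_upto N u.
Proof.
move=> S v. have [inj _] := S.
rewrite /ell (inv_upto_le inj (sbound_valid S) (leq_maxl (sbound u) N)).
by rewrite (inv_upto_le inj v (leq_maxr (sbound u) N)).
Qed.

Lemma ell_ext u w : in_Sinf u -> in_Sinf w -> (forall i, u i = w i) -> ell u = ell w.
Proof.
move=> Su Sw E.
have vw := sbound_valid Sw.
have vu : valid (sbound w) u by move=> i h; rewrite E vw.
rewrite (ell_eq Su vu) (ell_eq Sw vw) /inv_upto.
apply: eq_bigr => j _; apply: eq_bigr => i _; by rewrite !E.
Qed.

Lemma swap_Sinf u a b : in_Sinf u -> 0 < a -> 0 < b -> in_Sinf (swap u a b).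
Proof.
case=> inj [u0 [N hN]] ha hb; split; [|split].
- have H : forall x, swap u a b x = u (if x == a then b else if x == b then a else x).
    by move=> x; rewrite /swap; case: ifP => //; case: ifP.
  move=> x y; rewrite !H => /inj.
  by repeat (case: ifP => /eqP ?); lia.
- rewrite /swap. have -> : (0 == a) = false by lia.
  by have -> : (0 == b) = false by lia.
- exists (maxn N (maxn a b)) => i hi; rewrite /swap.
  have -> : (i == a) = false by lia.
  have -> : (i == b) = false by lia.
  apply: hN; lia.
Qed.

Definition hh (u : nat -> nat) (i j : nat) : nat := (i < j) && (u j < u i).
Definition HS (N : nat) (u : nat -> nat) :=
  \sum_(j <- iota 1 N) \sum_(i <- iota 1 N) hh u i j.

Lemma inv_HS N u : inv_upto N u = HS N u.
Proof.
rewrite /inv_upto /HS {1}/index_iota subSS subn0.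
apply: eq_big_seq => j; rewrite mem_iota => /andP [h1 h2].
have -> : iota 1 N = index_iota 1 N.+1 by rewrite /index_iota subSS subn0.
rewrite [in RHS](big_cat_nat _ (m:=1) (n:=j)) //=; last (rewrite /= in h2; lia).
rewrite [X in _ = _ + X]big1_seq ?addn0; last first.
  move=> i; rewrite mem_index_iota => /and3P [_ h3 h4]; rewrite /hh; lia.

apply: eq_big_seq => i; rewrite mem_index_iota /hh => /andP [_ ->] //.
Qed.

Lemma sum3 (r : seq nat) a b (F : nat -> nat) : uniq r -> a \in r -> b \in r -> a != b ->
  \sum_(i <- r) F i = F a + F b + \sum_(i <- r | (i != a) && (i != b)) F i.
Proof.
move=> U ha hb ab.
rewrite (bigD1_seq a) //= -addnA; congr (_ + _).
rewrite -big_filter (bigD1_seq b) ?filter_uniq //; last by rewrite mem_filter eq_sym ab.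
rewrite big_filter_cond; congr (_ + _).
Qed.

Definition col N u j := \sum_(i <- iota 1 N) hh u i j.
Definition Tc (u : nat -> nat) a b c := hh u c a + hh u c b + hh u a c + hh u b c.

Lemma HS_dec N u a b : 1 <= a -> a < b -> b <= N ->
  HS N u = hh u a b + hh u b a +
    \sum_(c <- iota 1 N | (c != a) && (c != b)) Tc u a b c +
    \sum_(j <- iota 1 N | (j != a) && (j != b)) \sum_(i <- iota 1 N | (i != a) && (i != b)) hh u i j.
Proof.
move=> h1 h2 h3.
have U : uniq (iota 1 N) by apply: iota_uniq.
have ha : a \in iota 1 N by rewrite mem_iota; lia.
have hb : b \in iota 1 N by rewrite mem_iota; lia.
have ab : a != b by lia.
have E : forall j, col N u j =
   hh u a j + hh u b j + \sum_(i <- iota 1 N | (i != a) && (i != b)) hh u i j.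
  by move=> j; exact: sum3.
rewrite (_ : HS N u = \sum_(j <- iota 1 N) col N u j) //.
rewrite (sum3 _ U ha hb ab) (E a) (E b).
have Es : \sum_(j <- iota 1 N | (j != a) && (j != b)) col N u j =
  \sum_(j <- iota 1 N | (j != a) && (j != b)) (hh u a j + hh u b j + \sum_(i <- iota 1 N | (i != a) && (i != b)) hh u i j).
  by apply: eq_bigr => j _; apply: E.
rewrite Es.
rewrite /Tc !big_split /=.
have -> : hh u a a = 0 by rewrite /hh ltnn.
have -> : hh u b b = 0 by rewrite /hh ltnn.
lia.
Qed.

Definition TT (a b c x y z : nat) : nat := (c < a) && (x < z) + (c < b) && (y < z) + (a < c) && (z < x) + (b < c) && (z < y).
Lemma Tnat (a b c x y z : nat) : a < b -> c != a -> c != b -> z != x -> z != y ->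
  (x < y -> TT a b c x y z <= TT a b c y x z /\ (a < c < b -> x < z < y -> TT a b c x y z + 2 <= TT a b c y x z)) /\
  (y < x -> TT a b c y x z <= TT a b c x y z).
Proof. rewrite /TT => *; split; [split|]; move=> *; lia. Qed.

Lemma leq_sum_seq (r : seq nat) (P : pred nat) (F G : nat -> nat) :
  (forall c, P c -> F c <= G c) -> \sum_(c <- r | P c) F c <= \sum_(c <- r | P c) G c.
Proof. by move=> H; apply: leq_sum. Qed.

Lemma sum_pick (r : seq nat) (P : pred nat) (F G : nat -> nat) c : uniq r -> c \in r -> P c ->
  (forall d, P d -> F d <= G d) -> F c + 2 <= G c ->
  \sum_(d <- r | P d) F d + 2 <= \sum_(d <- r | P d) G d.
Proof.
move=> U hc Pc le h.
rewrite !(big_mkcond P) !(bigD1_seq c) //= Pc.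
have : \sum_(i <- r | i != c) (if P i then F i else 0) <= \sum_(i <- r | i != c) (if P i then G i else 0).
  by apply: leq_sum => i _; case: ifP => // /le.
lia.
Qed.

Lemma kstep_facts k u a b : in_Sinf u -> kstep k u a b ->
  u a < u b /\ forall c, a < c < b -> ~ (u a < u c < u b).
Proof.
move=> S [hab hkb hl].
have [inj [u0 _]] := S.
have v := sbound_valid S.
set N := maxn (sbound u) b.
have vN : valid N u by apply: valid_le v _; apply: leq_maxl.
have S' := swap_Sinf S (a:=a) (b:=b) ltac:(lia) ltac:(lia).
have vN' : valid N (swap u a b).
  move=> i hi; rewrite /swap.
  have -> : (i == a) = false by lia.
  have -> : (i == b) = false by rewrite /N in hi; lia.
  by apply: vN.
rewrite (ell_eq S vN) (ell_eq S' vN') !inv_HS in hl.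
have a1 : 1 <= a by lia.
have ab : a < b by lia.
have bN : b <= N by apply: leq_maxr.
rewrite (HS_dec u a1 ab bN) (HS_dec (swap u a b) a1 ab bN) in hl.
have EQ : \sum_(j <- iota 1 N | (j != a) && (j != b)) \sum_(i <- iota 1 N | (i != a) && (i != b)) hh (swap u a b) i j
  = \sum_(j <- iota 1 N | (j != a) && (j != b)) \sum_(i <- iota 1 N | (i != a) && (i != b)) hh u i j.
  apply: eq_bigr => j /andP [/negbTE ja /negbTE jb]; apply: eq_bigr => i /andP [/negbTE ia /negbTE ib].
  by rewrite /hh /swap ja jb ia ib.
rewrite EQ in hl.
have sa : swap u a b a = u b by rewrite /swap eqxx.
have sb : swap u a b b = u a by rewrite /swap eqxx; have -> : (b == a) = false by lia.
have sc : forall c, c != a -> c != b -> swap u a b c = u c.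
  by move=> c /negbTE ca /negbTE cb; rewrite /swap ca cb.
have uab : u a != u b by apply/negP => /eqP /inj; lia.
have ucx : forall c, c != a -> c != b -> (u c != u a) /\ (u c != u b).
  by move=> c ca cb; split; apply/negP => /eqP /inj /eqP; lia.
have Tu : forall c, Tc u a b c = TT a b c (u a) (u b) (u c) by [].
have Tv : forall c, c != a -> c != b -> Tc (swap u a b) a b c = TT a b c (u b) (u a) (u c).
  by move=> c ca cb; rewrite /Tc /hh /TT sa sb sc.
have hab1 : hh u a b = (u b < u a) by rewrite /hh ab.
have hab2 : hh (swap u a b) a b = (u a < u b) by rewrite /hh ab sa sb.
have hba1 : hh u b a = 0 by rewrite /hh ltnNge (ltnW ab).
have hba2 : hh (swap u a b) b a = 0 by rewrite /hh ltnNge (ltnW ab).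
rewrite hab1 hab2 hba1 hba2 in hl.
move: hl.
set SU := \sum_(j <- iota 1 N | (j != a) && (j != b)) \sum_(i <- iota 1 N | (i != a) && (i != b)) hh u i j.
move=> hl.
case: (ltngtP (u a) (u b)) => [lt|gt|eq]; last by rewrite eq eqxx in uab.
- have le : forall c, (c != a) && (c != b) -> Tc u a b c <= Tc (swap u a b) a b c.
    move=> d /andP [da db]; rewrite Tu Tv //.
    have [h1 h2] := ucx d da db.
    by have [H _] := Tnat (x:=u a) (y:=u b) ab da db h1 h2; case: (H lt).
  split=> // c /andP [ac cb] /andP [h4 h5].
  have ca : c != a by clear -ac; lia.
  have cb' : c != b by clear -cb; lia.
  have hc : c \in iota 1 N by rewrite mem_iota; clear -ac cb bN a1; lia.
  have D : \sum_(d <- iota 1 N | (d != a) && (d != b)) Tc u a b d + 2 <=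
           \sum_(d <- iota 1 N | (d != a) && (d != b)) Tc (swap u a b) a b d.
    apply: (sum_pick (iota_uniq 1 N) hc) => //; first by rewrite ca cb'.
    rewrite Tu Tv //.
    have [h1 h2] := ucx c ca cb'.
    have [H _] := Tnat (x:=u a) (y:=u b) ab ca cb' h1 h2.
    case: (H lt) => _; apply; apply/andP; split => //.
  clear -hl D lt; lia.
- exfalso.
  have le : forall c, (c != a) && (c != b) -> Tc (swap u a b) a b c <= Tc u a b c.
    move=> d /andP [da db]; rewrite Tu Tv //.
    have [h1 h2] := ucx d da db.
    by have [_ H] := Tnat (x:=u a) (y:=u b) ab da db h1 h2; apply: H.
  have H := leq_sum_seq (iota 1 N) le.
  clear -hl gt H; lia.
Qed.

Lemma kstep_Sinf k u a b : in_Sinf u -> kstep k u a b -> in_Sinf (swap u a b).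
Proof. move=> S [h1 h2 _]; apply: swap_Sinf => //; lia. Qed.

Lemma step_L k u a b p : in_Sinf u -> kstep k u a b -> p <= k -> u p <= swap u a b p.
Proof.
move=> S st hp; have [lt _] := kstep_facts S st; have [h1 h2 _] := st.
rewrite /swap; case: ifP => [/eqP ->|_]; first exact: ltnW.
by have -> : (p == b) = false by lia.
Qed.

Lemma step_R k u a b p : in_Sinf u -> kstep k u a b -> k < p -> swap u a b p <= u p.
Proof.
move=> S st hp; have [lt _] := kstep_facts S st; have [h1 h2 _] := st.
rewrite /swap; have -> : (p == a) = false by lia.
case: ifP => [/eqP ->|_] //; exact: ltnW.
Qed.

Lemma chain_mono k u s w p : in_Sinf u -> is_kchain k u s w ->
  (p <= k -> u p <= w p) /\ (k < p -> w p <= u p).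
Proof.
elim: s u => [|[a b] s IH] u Su /=; first by move=> E; rewrite E.
case=> st ch; have Su1 := kstep_Sinf Su st.
have [IH1 IH2] := IH _ Su1 ch.
split=> hp.
- exact: leq_trans (step_L Su st hp) (IH1 hp).
- exact: leq_trans (IH2 hp) (step_R Su st hp).
Qed.

Lemma chain_range k u s w x : is_kchain k u s w -> x \in s -> (1 <= x.1 <= k) /\ k < x.2.
Proof.
elim: s u => [|[a b] s IH] u //=.
case=> st ch; rewrite in_cons => /orP [/eqP ->|xs]; last exact: IH ch xs.
by have [h1 h2 _] := st.
Qed.

Lemma chain_used k u s w x : in_Sinf u -> is_kchain k u s w -> x \in s ->
  u x.1 < w x.1 /\ w x.2 < u x.2.
Proof.
elim: s u => [|[a b] s IH] u Su //=.
case=> st ch; have Su1 := kstep_Sinf Su st.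
have [h1 h2 _] := st.
have [lt _] := kstep_facts Su st.
rewrite in_cons => /orP [/eqP -> /=|xs].
- have [m1 _] := chain_mono a Su1 ch.
  have [_ m2] := chain_mono b Su1 ch.
  have ea : swap u a b a = u b by rewrite /swap eqxx.
  have eb : swap u a b b = u a by rewrite /swap eqxx; have -> : (b == a) = false by lia.
  split.
  + apply: leq_trans lt _; rewrite -ea; apply: m1; lia.
  + apply: leq_ltn_trans lt; rewrite -eb; apply: m2; lia.
- have [r1 r2] := chain_range ch xs.
  have [i1 i2] := IH _ Su1 ch xs.
  split.
  + apply: leq_ltn_trans _ i1; apply: step_L Su st _; by case/andP: r1.
  + apply: leq_trans i2 _; exact: step_R Su st r2.
Qed.

Lemma chain_fix k u s w p : is_kchain k u s w ->
  (forall x, x \in s -> (x.1 != p) && (x.2 != p)) -> w p = u p.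
Proof.
elim: s u => [|[a b] s IH] u /=; first by move=> E _; rewrite E.
case=> st ch H.
rewrite (IH _ ch); last by move=> x xs; apply: H; rewrite in_cons xs orbT.
have /andP [/negbTE ha /negbTE hb] := H (a, b) (mem_head _ _).
by rewrite /swap eq_sym ha eq_sym hb.
Qed.

Lemma chain_first_R k u s w q : in_Sinf u -> is_kchain k u s w -> k < q -> w q != u q ->
  exists a', (a', q) \in s /\ u q <= w a'.
Proof.
elim: s u => [|[a b] s IH] u Su /=; first by move=> E _; rewrite E eqxx.
case=> st ch hq hw; have Su1 := kstep_Sinf Su st.
have [h1 h2 _] := st.
case: (eqVneq b q) => [eb|nb].
- subst q; exists a; split; first exact: mem_head.
  have [m1 _] := chain_mono a Su1 ch.
  have ea : swap u a b a = u b by rewrite /swap eqxx.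
  rewrite -ea; apply: m1; lia.
- have e : swap u a b q = u q.
    rewrite /swap; have -> : (q == a) = false by lia.
    by rewrite eq_sym (negbTE nb).
  have [a' [m l]] := IH _ Su1 ch hq ltac:(by rewrite e).
  by exists a'; rewrite in_cons m orbT -e.
Qed.

Lemma chain_Rorder k u s w p q : in_Sinf u -> is_kchain k u s w -> k < p -> p < q ->
  u p < u q -> w p < w q.
Proof.
elim: s u => [|[a b] s IH] u Su /=; first by move=> E _ _; rewrite !E.
case=> st ch hp hpq lt; have Su1 := kstep_Sinf Su st.
have [h1 h2 _] := st.
have [lab nm] := kstep_facts Su st.
have [inj _] := Su.
apply: (IH _ Su1 ch hp hpq).
have pa : (p == a) = false by lia.
have qa : (q == a) = false by lia.
rewrite /swap pa qa.
case: (eqVneq p b) => [epb|npb].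
- subst p; have -> : (q == b) = false by lia.
  exact: ltn_trans lab lt.
- case: (eqVneq q b) => [eqb|nqb] //.
  subst q.
  rewrite ltnNge; apply/negP => le.
  have ne : u a != u p by apply/negP => /eqP /inj; lia.
  apply: (nm p); first by lia.
  by rewrite lt andbT ltn_neqAle ne le.
Qed.

Lemma chain_ell k u s w : in_Sinf u -> in_Sinf w -> is_kchain k u s w -> ell w = ell u + size s.
Proof.
elim: s u => [|[a b] s IH] u Su Sw /=.
- by move=> E; rewrite addn0 (ell_ext Su Sw E).
- case=> st ch; rewrite (IH _ (kstep_Sinf Su st) Sw ch).
  by have [_ _ ->] := st; rewrite addSnnS.
Qed.

Definition invc (w : nat -> nat) (x y : nat * nat) : Prop :=
  w x.1 < w y.1 \/ (w x.1 = w y.1 /\ w y.2 < w x.2).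

Lemma noinv_cons w x s : no_inversions w (x :: s) <->
  no_inversions w s /\ (forall y, y \in s -> ~ invc w x y).
Proof.
split.
- move=> H; split.
  + move=> i j [hij c]; apply: (H i.+1 j.+1); split => //.
  + move=> y ys c; apply: (H 0 (index y s).+1); split => /=.
    * by rewrite ltnS index_mem ys.
    * by rewrite nth_index.
- move=> [H1 H2] [|i] [|j] [hij c] //=.
  + apply: (H2 (nth (0, 0) s j)); last exact: c.
    by apply: mem_nth; move: hij; rewrite /=; lia.
  + by apply: (H1 i j); split.
Qed.

Lemma is_cm_cons k u w a b s : in_Sinf u -> in_Sinf w -> is_kchain k u ((a, b) :: s) w ->
  is_cm k u w ((a, b) :: s) ->
  (s = [::] /\ forall i, w i = swap u a b i) \/ (s != [::] /\ cm_ab k u w a b /\ is_cm k (swap u a b) w s).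
Proof.
move=> Su Sw ch.
have := chain_ell Su Sw ch => /= hl.
rewrite /=; case: ifP => [_ [-> _ _ E]|/negbT ne [_ cm ic]]; first by left.
right; split => //.
by case: s ch hl ne ic => //= _; rewrite addn1 eqxx.
Qed.

Theorem mainTheorem3 (k : nat) (u w : nat -> nat) (s : seq (nat * nat)) :
  1 <= k -> in_Sinf u -> in_Sinf w ->
  kle k u w -> ~ (forall i, u i = w i) ->
  is_kchain k u s w ->
  (is_cm k u w s <-> no_inversions w s).
Proof.
move=> k1 Su Sw _.
have [injw _] := Sw.
elim: s u Su => [|[a b] s IH] u Su neq /=; first by move=> E; exfalso; apply: neq.
move=> [st ch].
have Su1 := kstep_Sinf Su st.
have [h1 h2 hl1] := st.
have [lab nm] := kstep_facts Su st.
have [inju _] := Su.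
have hell := chain_ell Su1 Sw ch.
have ea : swap u a b a = u b by rewrite /swap eqxx.
have eb : swap u a b b = u a by rewrite /swap eqxx; have -> : (b == a) = false by lia.
have ec : forall c, c != a -> c != b -> swap u a b c = u c.
  by move=> c /negbTE ca /negbTE cb; rewrite /swap ca cb.
case: s IH ch hell => [|[a2 b2] s'] IH ch hell.
- rewrite hell hl1 addn0 eqxx; split.
  + move=> _ i j [/andP [hij hj] _]; rewrite /= in hj; lia.
  + by move=> _; split => // i; rewrite ch.
have -> : (ell w == (ell u).+1) = false by rewrite hell hl1 /=; lia.
have ltell : (ell u).+1 < ell w by rewrite hell hl1 /=; lia.
have neq1 : ~ (forall i, swap u a b i = w i).
  by move=> E; move: hell; rewrite (ell_ext Su1 Sw E) /=; lia.
have IH' := IH _ Su1 neq1 ch.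
set sf := (a2, b2) :: s' in ch IH' *.
have hsf : (a2, b2) \in sf by apply: mem_head.
have [/andP [ra2 ra2'] rb2] := chain_range ch hsf.
rewrite /= in ra2 ra2' rb2.
have [ua2 wb2] := chain_used Su1 ch hsf.
rewrite /= in ua2 wb2.
have [st2 ch2] := ch.
have [lab2 _] := kstep_facts Su1 st2.
rewrite noinv_cons.
split.
- case=> _ cm iscm. split; first by apply/IH'.
  case: cm => _ [[I1 I2] [II1 [II2 II3]]].
  move=> [c d] ys /=.
  have [/andP [rc1 rc2] rd] := chain_range ch ys.
  rewrite /= in rc1 rc2 rd.
  have [uc _] := chain_used Su1 ch ys.
  rewrite /= in uc.
  have uc' : u c < w c by apply: leq_ltn_trans (step_L Su st rc2) uc.
  have wle : w c <= w a by apply: I2 => //; apply/andP.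
  move=> [lt | [eq lt2]] /=; first by rewrite /= in lt; lia.
  rewrite /= in eq lt2.
  have ca : c = a by apply: injw.
  subst c.
  have ha2 : a2 = a.
    have := is_cm_cons Su1 Sw ch iscm.
    case=> [[es' _]| [_ [cm2 _]]].
    * by move: ys; rewrite /sf es' inE => /eqP [->].
    * case: cm2 => _ [[_ I2'] _].
      have : w a <= w a2 by apply: I2' => //; apply/andP; split => //; lia.
      have : w a2 <= w a.
        apply: I2 => //; first by apply/andP.
        by apply: leq_ltn_trans (step_L Su st ra2') ua2.
      by move=> x y; apply: injw; lia.
  subst a2.
  have b2b : b2 != b.
    apply/negP => /eqP e; subst b2.
    by move: lab2; rewrite ea eb; lia.
  have ub2 : u b2 = swap u a b b2 by rewrite ec //; lia.
  have wbb2 : w b <= w b2.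
    case: (leqP (w b2) (u a)) => hw.
    * apply: II3 => //; rewrite ub2; move: lab2; rewrite ea; lia.
    * lia.
  have wb2d : w b2 <= w d.
    move: ys; rewrite /sf inE => /orP [/eqP [->] //|ys'].
    have [_ H] := (noinv_cons w (a, b2) s').1 (IH'.1 iscm).
    have := H _ ys'; rewrite /invc /=; lia.
  lia.
- move=> [ni hd].
  have iscm := IH'.2 ni.
  have inv0 : forall y, y \in sf -> w y.1 <= w a /\ (w y.1 = w a -> w b <= w y.2).
    move=> y ys; have := hd y ys; rewrite /invc /=; lia.
  split => //.
  split; first by split.
  have Ia : u a < w a.
    have [m _] := chain_mono a Su1 ch.
    rewrite -ea in lab; apply: leq_trans lab (m _); lia.
  have [_ mb] := chain_mono b Su1 ch.
  split; [split | split; [|split]] => //.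
  + move=> j /andP [j1 j2] uj.
    case: (eqVneq j a) => [-> //|ja].
    case: (boolP (has (fun x => (x.1 == j) || (x.2 == j)) sf)) => [/hasP [x xs /orP [/eqP ex|/eqP ex]]|hn].
    * by have [H _] := inv0 x xs; rewrite -ex.
    * have [_ r] := chain_range ch xs; lia.
    * have E : w j = swap u a b j.
        apply: (chain_fix ch) => x xs.
        by move/hasPn: hn => /(_ x xs); rewrite negb_or.
      by move: uj; rewrite E ec //; [lia | lia].
  + by rewrite -eb; apply: mb.
  + move=> q hq hq1 hq2.
    case: (eqVneq q b) => [-> //|qb].
    have qa : q != a by lia.
    have u1q : swap u a b q = u q by rewrite ec.
    have uqb : u q != u b by apply/negP => /eqP /inju; apply/eqP.
    case: (ltngtP (u q) (u b)) => [lqb|gqb|eqb]; last by rewrite eqb eqxx in uqb.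
    * have bq : b < q.
        case: (ltngtP b q) => // [lt|e]; last by rewrite e eqxx in qb.
        exfalso; apply: (nm q); [lia | lia].
      apply: ltnW; apply: (chain_Rorder Su1 ch h2 bq).
      by rewrite eb u1q.
    * case: (eqVneq a2 a) => [ea2|na2].
      - subst a2.
        have wbb2 : w b <= w b2 by have [_ H] := inv0 _ hsf; apply: H.
        have := is_cm_cons Su1 Sw ch iscm.
        case=> [[es' E]| [_ [cm2 _]]].
        + case: (eqVneq q b2) => [-> //|qb2].
          exfalso; move: hq2; rewrite E.
          rewrite /swap; have -> : (q == a) = false by lia.
          rewrite (negbTE qb2) (negbTE qb); lia.
        + case: cm2 => _ [_ [_ [_ II3']]].
          apply: leq_trans wbb2 _; apply: II3' => //.
          -- by rewrite ea u1q.
          -- by rewrite ea; lia.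
      - exfalso.
        have wa : w a = u b.
          rewrite -ea; apply: (chain_fix ch) => x xs.
          have [/andP [r1 r2] r3] := chain_range ch xs.
          apply/andP; split; last by lia.
          apply/negP => /eqP xa.
          move: xs; rewrite /sf inE => /orP [/eqP xe|xs'].
          ++ by move: na2; rewrite -xa xe eqxx.
          ++ have [_ H] := (noinv_cons w (a2, b2) s').1 ni.
             have := H _ xs'; rewrite /invc /= xa.
             have [H2 _] := inv0 _ hsf. rewrite /= in H2.
             move=> H3; apply: H3; left.
             have : w a2 != w a by apply/negP => /eqP /injw /eqP; rewrite (negbTE na2).
             lia.
        have wq : w q != swap u a b q by rewrite u1q; lia.
        have [a' [ma' la']] := chain_first_R Su1 ch hq wq.
        have [H _] := inv0 _ ma'; rewrite /= in H.
        move: la'; rewrite u1q; lia.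
Qed.
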